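(* Let $(X,d,0)$ be a pointed metric space, let $(Y_j)_{j\in\varGamma}$ be a family of subsets of $X$, and let $(R_j)_{j\in\varGamma}$ be Lipschitz maps $R_j:X\to Y_j$ with $R_j(0)=0$ (so $0\in Y_j$) and $M:=\sup_{j}\|R_j\|_{\operatorname{Lip}}<\infty$. Suppose $\mathcal{U}$ is an ultrafilter on $\varGamma$ such that $\lim_{\mathcal{U}}R_j(x)=x$ in $(X,d)$ for every $x\in X$. Then \[\operatorname{Lip}_0(X)\stackrel{c}{\hookrightarrow}\left(\bigoplus_{j\in\varGamma}\operatorname{Lip}_0(Y_j)\right)_{\ell_\infty},\] where each $Y_j$ is pointed at $0$.
   Context: $\operatorname{Lip}_0(Z)$ denotes the Banach space of real Lipschitz functions on the pointed metric space $Z$ vanishing at the base point, normed by the smallest Lipschitz constant $\|\cdot\|_{\operatorname{Lip}}$ (also used for Lipschitz constants of maps). $\left(\bigoplus_jZ_j\right)_{\ell_\infty}$ is the space of families $(z_j)$ with $\sup_j\|z_j\|<\infty$ and the sup norm. $X\stackrel{c}{\hookrightarrow}Y$ means $Y$ contains a complemented subspace isomorphic to $X$. *)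

(* Defs.v *)
From Stdlib Require Import Reals.
Open Scope R_scope.

Record is_metric (X : Type) (d : X -> X -> R) : Prop := {
  metric_refl : forall x, d x x = 0;
  metric_sep  : forall x y, d x y = 0 -> x = y;
  metric_sym  : forall x y, d x y = d y x;
  metric_tri  : forall x y z, d x z <= d x y + d y z
}.

Record is_ultrafilter (G : Type) (U : (G -> Prop) -> Prop) : Prop := {
  uf_full   : U (fun _ => True);
  uf_proper : ~ U (fun _ => False);
  uf_mono   : forall A B : G -> Prop, (forall j, A j -> B j) -> U A -> U B;
  uf_inter  : forall A B : G -> Prop, U A -> U B -> U (fun j => A j /\ B j);
  uf_ultra  : forall A : G -> Prop, U A \/ U (fun j => ~ A j)
}.

Definition lipschitz_with {A B : Type} (dA : A -> A -> R) (dB : B -> B -> R)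
  (f : A -> B) (L : R) : Prop :=
  0 <= L /\ forall x y, dB (f x) (f y) <= L * dA x y.

Definition dR (a b : R) : R := Rabs (a - b).

Definition Lip0 {A : Type} (dA : A -> A -> R) (a0 : A) (f : A -> R) : Prop :=
  f a0 = 0 /\ exists L, lipschitz_with dA dR f L.

(* A subset Y of X as a metric space (restriction of d), pointed at x0. *)
Definition dsub {X : Type} (d : X -> X -> R) (P : X -> Prop)
  (u v : {x : X | P x}) : R := d (proj1_sig u) (proj1_sig v).

Definition Lip0_sub {X : Type} (d : X -> X -> R) (x0 : X) (P : X -> Prop)
  (f : {x : X | P x} -> R) : Prop :=
  (forall h : P x0, f (exist _ x0 h) = 0) /\ exists L, lipschitz_with (dsub d P) dR f L.

Definition Fam {G X : Type} (Y : G -> X -> Prop) : Type :=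
  forall j : G, {x : X | Y j x} -> R.

Definition fam_add {G X} {Y : G -> X -> Prop} (F H : Fam Y) : Fam Y :=
  fun j y => F j y + H j y.
Definition fam_scal {G X} {Y : G -> X -> Prop} (a : R) (F : Fam Y) : Fam Y :=
  fun j y => a * F j y.
Definition fam_zero {G X} {Y : G -> X -> Prop} : Fam Y := fun j y => 0.

Definition linf_norm_le {G X} (d : X -> X -> R) (Y : G -> X -> Prop)
  (F : Fam Y) (L : R) : Prop :=
  forall j, lipschitz_with (dsub d (Y j)) dR (F j) L.

Definition in_linf_Lip0 {G X} (d : X -> X -> R) (x0 : X) (Y : G -> X -> Prop)
  (F : Fam Y) : Prop :=
  (forall j, Lip0_sub d x0 (Y j) (F j)) /\ exists L, linf_norm_le d Y F L.

Definition Lip0_compl_embeds {G X : Type} (d : X -> X -> R) (x0 : X)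
  (Y : G -> X -> Prop) : Prop :=
  exists (S : Fam Y -> Prop) (Q : Fam Y -> Fam Y) (J : (X -> R) -> Fam Y),
    (* S is a linear subspace of the ell_infty sum *)
    (forall F, S F -> in_linf_Lip0 d x0 Y F) /\
    S fam_zero /\
    (forall F H a, S F -> S H -> S (fam_add F H) /\ S (fam_scal a F)) /\
    (* Q is a bounded linear projection of the sum onto S *)
    (forall F, in_linf_Lip0 d x0 Y F -> S (Q F)) /\
    (forall F, S F -> Q F = F) /\
    (forall F H a, in_linf_Lip0 d x0 Y F -> in_linf_Lip0 d x0 Y H ->
        Q (fam_add F H) = fam_add (Q F) (Q H) /\ Q (fam_scal a F) = fam_scal a (Q F)) /\
    (exists C, forall F L, in_linf_Lip0 d x0 Y F -> linf_norm_le d Y F L ->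
        linf_norm_le d Y (Q F) (C * L)) /\
    (* J is a linear isomorphism from Lip_0(X) onto S *)
    (forall f, Lip0 d x0 f -> S (J f)) /\
    (forall F, S F -> exists f, Lip0 d x0 f /\ J f = F) /\
    (forall f g a, Lip0 d x0 f -> Lip0 d x0 g ->
        J (fun x => f x + g x) = fam_add (J f) (J g) /\
        J (fun x => a * f x) = fam_scal a (J f)) /\
    (exists C, forall f L, Lip0 d x0 f -> lipschitz_with d dR f L ->
        linf_norm_le d Y (J f) (C * L)) /\
    (exists c, forall f L, Lip0 d x0 f -> linf_norm_le d Y (J f) L ->
        lipschitz_with d dR f (c * L)).

(* Main.v *)
Require Import Defs.
From Stdlib Require Import Reals Lra Classical ClassicalEpsilon FunctionalExtensionality.
Open Scope R_scope.

Ltac rabs := unfold Rabs in *; repeat match goal with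
  | |- context[Rcase_abs ?x] => destruct (Rcase_abs x)
  | H : context[Rcase_abs ?x] |- _ => destruct (Rcase_abs x) end; lra.

Definition uconv {G : Type} (U : (G -> Prop) -> Prop) (a : G -> R) (l : R) : Prop :=
  forall eps, 0 < eps -> U (fun j => Rabs (a j - l) < eps).

Lemma uf_nonempty G U (HU : is_ultrafilter G U) (A : G -> Prop) : U A -> exists j, A j.
Proof.
  intros H. apply NNPP; intro Hn. apply (uf_proper _ _ HU).
  apply (uf_mono _ _ HU A); auto. intros j Aj; apply Hn; eauto.
Qed.

Lemma uconv_unique G U (HU : is_ultrafilter G U) a l1 l2 :
  uconv U a l1 -> uconv U a l2 -> l1 = l2.
Proof.
  intros H1 H2. destruct (Req_dec l1 l2) as [|Hne]; auto.
  assert (He : 0 < Rabs (l1 - l2) / 2).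
  { assert (0 < Rabs (l1 - l2)) by (apply Rabs_pos_lt; lra). lra. }
  destruct (uf_nonempty _ _ HU _ (uf_inter _ _ HU _ _ (H1 _ He) (H2 _ He))) as [j [A B]].
  exfalso. rabs.
Qed.

Definition ulim {G : Type} (U : (G -> Prop) -> Prop) (a : G -> R) : R :=
  epsilon (inhabits 0) (fun l => uconv U a l).

Lemma ulim_eq G U (HU : is_ultrafilter G U) a l : uconv U a l -> ulim U a = l.
Proof.
  intro H. unfold ulim.
  assert (H' := epsilon_spec (inhabits 0) (fun l => uconv U a l) (ex_intro _ l H)).
  apply (uconv_unique _ _ HU a); [exact H' | exact H].
Qed.

Lemma uconv_add G U (HU : is_ultrafilter G U) a b la lb :
  uconv U a la -> uconv U b lb -> uconv U (fun j => a j + b j) (la + lb).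
Proof.
  intros Ha Hb eps He.
  apply (uf_mono _ _ HU (fun j => Rabs (a j - la) < eps/2 /\ Rabs (b j - lb) < eps/2)).
    
  - intros j [A B]. rabs.
  - apply uf_inter; auto; [apply Ha | apply Hb]; lra.
Qed.

Lemma uconv_sub G U (HU : is_ultrafilter G U) a b la lb :
  uconv U a la -> uconv U b lb -> uconv U (fun j => a j - b j) (la - lb).
Proof.
  intros Ha Hb eps He.
  apply (uf_mono _ _ HU (fun j => Rabs (a j - la) < eps/2 /\ Rabs (b j - lb) < eps/2)).
    
  - intros j [A B]. rabs.
  - apply uf_inter; auto; [apply Ha | apply Hb]; lra.
Qed.

Lemma arith_small K t eps : 0 <= K -> 0 < eps -> t < eps / (K + 1) -> K * t < eps.
Proof.
  intros HK He Ht.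
  assert (E : K * (eps / (K + 1)) = eps - eps / (K + 1)) by (field; lra).
  assert (P : 0 < eps / (K + 1)) by (apply Rdiv_lt_0_compat; lra).
  assert (K * t <= K * (eps / (K + 1))) by (apply Rmult_le_compat_l; lra).
  lra.
Qed.

Lemma uconv_scal G U (HU : is_ultrafilter G U) a la c :
  uconv U a la -> uconv U (fun j => c * a j) (c * la).
Proof.
  intros Ha eps He.
  assert (P : 0 < eps / (Rabs c + 1)) by (apply Rdiv_lt_0_compat; pose proof (Rabs_pos c); lra).
  refine (uf_mono _ _ HU _ _ (fun j H => _) (Ha _ P)).
  simpl in *. rewrite <- Rmult_minus_distr_l, Rabs_mult.
  apply arith_small; auto. apply Rabs_pos.
Qed.

Lemma uconv_bound G U (HU : is_ultrafilter G U) a l K :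
  uconv U a l -> (forall j, Rabs (a j) <= K) -> Rabs l <= K.
Proof.
  intros Ha Hb. destruct (Rle_lt_dec (Rabs l) K) as [|Hl]; auto.
  assert (He : 0 < Rabs l - K) by lra.
  destruct (uf_nonempty _ _ HU _ (Ha _ He)) as [j Hj].
  specialize (Hb j). exfalso. rabs.
Qed.

Lemma bounded_uconv G U (HU : is_ultrafilter G U) a B :
  (forall j, Rabs (a j) <= B) -> exists l, uconv U a l.
Proof.
  intros Hb.
  set (E := fun t => U (fun j => t <= a j)).
  assert (Hub : is_upper_bound E B).
  { intros t Ht. destruct (Rle_lt_dec t B) as [|Hl]; auto.
    destruct (uf_nonempty _ _ HU _ Ht) as [j Hj]. specialize (Hb j). exfalso; rabs. }
  assert (HE : E (- B)).
  { apply (uf_mono _ _ HU (fun _ => True)); [|apply uf_full; auto].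
    intros j _. specialize (Hb j). rabs. }
  destruct (completeness E (ex_intro _ B Hub) (ex_intro _ _ HE)) as [m [Hm1 Hm2]].
  exists m. intros eps He.
  assert (Ht : exists t, E t /\ m - eps < t).
  { apply NNPP; intro Hn.
    assert (is_upper_bound E (m - eps)).
    { intros t Et. destruct (Rle_lt_dec t (m - eps)) as [|Hl]; auto.
      exfalso; apply Hn; eauto. }
    specialize (Hm2 _ H). lra. }
  destruct Ht as [t [Et Ht]].
  assert (Hn : ~ E (m + eps / 2)).
  { intro Hc. specialize (Hm1 _ Hc). lra. }
  destruct (uf_ultra _ _ HU (fun j => m + eps / 2 <= a j)) as [Hc|Hc].
  - contradiction.
  - refine (uf_mono _ _ HU _ _ (fun j H => _) (uf_inter _ _ HU _ _ Et Hc)).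
    simpl in H. destruct H as [H1 H2]. apply Rnot_le_lt in H2. rabs.
Qed.

Lemma metric_nonneg X d (Hd : is_metric X d) x y : 0 <= d x y.
Proof.
  pose proof (metric_tri _ _ Hd x y x). rewrite (metric_refl _ _ Hd) in H.
  rewrite (metric_sym _ _ Hd y x) in H. lra.
Qed.

Theorem mainTheorem12 (X : Type) (d : X -> X -> R) (x0 : X)
  (G : Type) (Y : G -> X -> Prop) (Rj : G -> X -> X)
  (U : (G -> Prop) -> Prop) :
  is_metric X d ->
  (forall j x, Y j (Rj j x)) ->
  (forall j, Rj j x0 = x0) ->
  (exists M, forall j, lipschitz_with d d (Rj j) M) ->
  is_ultrafilter G U ->
  (forall x eps, 0 < eps -> U (fun j => d (Rj j x) x < eps)) ->
  Lip0_compl_embeds d x0 Y.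
Proof.
  intros Hd HY HR0 [M HM] HU Hconv.
  destruct (uf_nonempty _ _ HU _ (uf_full _ _ HU)) as [j0 _].
  assert (HM0 : 0 <= M) by apply (HM j0).
  pose proof (metric_nonneg _ _ Hd) as Hdn.
  set (J := fun (f : X -> R) => (fun j (y : {x : X | Y j x}) => f (proj1_sig y)) : Fam Y).
  set (gfun := fun (F : Fam Y) (x : X) => ulim U (fun j => F j (exist _ (Rj j x) (HY j x)))).
  set (Q := fun F => J (gfun F)).
  set (S := fun F => exists f, Lip0 d x0 f /\ F = J f).
  assert (JLip : forall f K, lipschitz_with d dR f K ->
            forall j, lipschitz_with (dsub d (Y j)) dR (J f j) K).
  { intros f K [HK0 HK] j; split; auto. intros u v; apply HK. }
  assert (Gspec : forall F L, in_linf_Lip0 d x0 Y F -> linf_norm_le d Y F L ->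
     forall x, uconv U (fun j => F j (exist _ (Rj j x) (HY j x))) (gfun F x)).
  { intros F L [HF0 _] HFL x.
    assert (HL0 : 0 <= L) by apply (HFL j0).
    destruct (bounded_uconv _ _ HU (fun j => F j (exist _ (Rj j x) (HY j x))) (L * (M * d x x0)))
      as [l Hl].
    - intros j. pose proof (HY j x0) as h. rewrite HR0 in h.
      destruct (HF0 j) as [Hz _]. specialize (Hz h).
      destruct (HFL j) as [_ HL]. specialize (HL (exist _ (Rj j x) (HY j x)) (exist _ x0 h)).
      unfold dR, dsub in HL; simpl in HL. rewrite Hz, Rminus_0_r in HL.
      destruct (HM j) as [_ HMj]. specialize (HMj x x0). rewrite HR0 in HMj.
      apply Rle_trans with (1 := HL). apply Rmult_le_compat_l; auto.
    - unfold gfun. rewrite (ulim_eq _ _ HU _ l Hl). exact Hl. }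
  assert (Glip : forall F L, in_linf_Lip0 d x0 Y F -> linf_norm_le d Y F L ->
     Lip0 d x0 (gfun F) /\ lipschitz_with d dR (gfun F) (M * L)).
  { intros F L HF HFL.
    assert (HL0 : 0 <= L) by apply (HFL j0).
    assert (Hlip : lipschitz_with d dR (gfun F) (M * L)).
    { split; [apply Rmult_le_pos; auto|]. intros x y.
      pose proof (uconv_sub _ _ HU _ _ _ _ (Gspec F L HF HFL x) (Gspec F L HF HFL y)) as Hs.
      unfold dR. apply (uconv_bound _ _ HU _ _ _ Hs). intros j.
      destruct (HFL j) as [_ HL].
      specialize (HL (exist _ (Rj j x) (HY j x)) (exist _ (Rj j y) (HY j y))).
      unfold dR, dsub in HL; simpl in HL.
      destruct (HM j) as [_ HMj]. specialize (HMj x y).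
      apply Rle_trans with (1 := HL).
      replace (M * L * d x y) with (L * (M * d x y)) by ring.
      apply Rmult_le_compat_l; auto. }
    split; [|exact Hlip]. split; [|exists (M * L); exact Hlip].
    unfold gfun. apply (ulim_eq _ _ HU).
    intros eps He. apply (uf_mono _ _ HU (fun _ => True)); [|apply uf_full; auto].
    intros j _. destruct HF as [HF0 _]. destruct (HF0 j) as [Hz _].
    assert (forall a (h : Y j a), a = x0 -> F j (exist _ a h) = 0) as Hz'.
    { intros a h ->. apply Hz. }
    rewrite Hz' by apply HR0. rewrite Rminus_0_r, Rabs_R0. exact He. }
  assert (Fspec : forall f K, lipschitz_with d dR f K -> forall x,
     uconv U (fun j => f (Rj j x)) (f x)).
  { intros f K [HK0 HK] x eps He.
    assert (P : 0 < eps / (K + 1)) by (apply Rdiv_lt_0_compat; lra).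
    refine (uf_mono _ _ HU _ _ (fun j H => _) (Hconv x _ P)). simpl in H.
    apply Rle_lt_trans with (K * d (Rj j x) x); [apply HK|].
    apply arith_small; auto. }
  assert (Lip0_add : forall f g, Lip0 d x0 f -> Lip0 d x0 g -> Lip0 d x0 (fun x => f x + g x)).
  { intros f g [Hf0 [K1 [HK1 Hf]]] [Hg0 [K2 [HK2 Hg]]]. split; [rewrite Hf0, Hg0; ring|].
    exists (K1 + K2); split; [lra|]. intros x y. specialize (Hf x y); specialize (Hg x y).
    unfold dR in *. replace (f x + g x - (f y + g y)) with ((f x - f y) + (g x - g y)) by ring.
    eapply Rle_trans; [apply Rabs_triang|]. lra. }
  assert (Lip0_scal : forall f a, Lip0 d x0 f -> Lip0 d x0 (fun x => a * f x)).
  { intros f a [Hf0 [K [HK Hf]]]. split; [rewrite Hf0; ring|].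
    exists (Rabs a * K); split; [apply Rmult_le_pos; auto; apply Rabs_pos|].
    intros x y. unfold dR in *. rewrite <- Rmult_minus_distr_l, Rabs_mult, Rmult_assoc.
    apply Rmult_le_compat_l; [apply Rabs_pos | apply Hf]. }
  assert (SJ : forall f, Lip0 d x0 f -> in_linf_Lip0 d x0 Y (J f)).
  { intros f [Hf0 [K HK]]. split.
    - intros j. split; [intros h; exact Hf0|]. exists K; apply JLip; auto.
    - exists K. intros j; apply JLip; auto. }
  exists S, Q, J.
  split; [intros F [f [Hf ->]]; apply SJ; auto|].
  split.
  { exists (fun _ => 0). split; [|reflexivity]. split; [reflexivity|].
    exists 0. split; [lra|]. intros x y. unfold dR. rewrite Rminus_0_r, Rabs_R0. lra. }
  split.
  { intros F H a [f [Hf ->]] [h [Hh ->]]. split.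
    - exists (fun x => f x + h x). split; auto.
    - exists (fun x => a * f x). split; auto. }
  split.
  { intros F HF. destruct HF as [HF0 [L HFL]]. exists (gfun F).
    split; [apply (Glip F L); [split; [|exists L]|]; auto | reflexivity]. }
  split.
  { intros F [f [[Hf0 [K HK]] ->]]. unfold Q.
    replace (gfun (J f)) with f; [reflexivity|].
    apply functional_extensionality; intros x. symmetry.
    unfold gfun. apply (ulim_eq _ _ HU). exact (Fspec f K HK x). }
  split.
  { intros F H a HF HH.
    destruct HF as [HF0 [L1 HL1]]. destruct HH as [HH0 [L2 HL2]].
    assert (HF : in_linf_Lip0 d x0 Y F) by (split; [|exists L1]; auto).
    assert (HH : in_linf_Lip0 d x0 Y H) by (split; [|exists L2]; auto).
    split; unfold Q.
    - replace (gfun (fam_add F H)) with (fun x => gfun F x + gfun H x); [reflexivity|].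
      apply functional_extensionality; intros x. symmetry.
      unfold gfun at 1. apply (ulim_eq _ _ HU).
      exact (uconv_add _ _ HU _ _ _ _ (Gspec F L1 HF HL1 x) (Gspec H L2 HH HL2 x)).
    - replace (gfun (fam_scal a F)) with (fun x => a * gfun F x); [reflexivity|].
      apply functional_extensionality; intros x. symmetry.
      unfold gfun at 1. apply (ulim_eq _ _ HU).
      exact (uconv_scal _ _ HU _ _ a (Gspec F L1 HF HL1 x)). }
  split.
  { exists M. intros F L HF HFL. intros j.
    destruct (Glip F L HF HFL) as [_ Hl]. apply JLip. exact Hl. }
  split; [intros f Hf; exists f; auto|].
  split; [intros F [f [Hf ->]]; exists f; auto|].
  split; [intros; split; reflexivity|].
  split.
  { exists 1. intros f L Hf HL. rewrite Rmult_1_l. intros j. apply JLip; auto. }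
  exists 1. intros f L [Hf0 [K [HK0 HK]]] HJ.
  assert (HL0 : 0 <= L) by apply (HJ j0).
  rewrite Rmult_1_l. split; auto. intros x y.
  destruct (Rle_lt_dec (dR (f x) (f y)) (L * d x y)) as [|Hlt]; auto.
  exfalso.
  set (del := dR (f x) (f y) - L * d x y).
  assert (Hdel : 0 < del) by (unfold del; lra).
  set (e := del / (2 * K + 2 * L + 1)).
  assert (He : 0 < e) by (apply Rdiv_lt_0_compat; lra).
  assert (Ee : (2 * K + 2 * L) * e = del - e) by (unfold e; field; lra).
  destruct (uf_nonempty _ _ HU _ (uf_inter _ _ HU _ _ (Hconv x e He) (Hconv y e He)))
    as [j [H1 H2]].
  destruct (HJ j) as [_ HJj].
  specialize (HJj (exist _ (Rj j x) (HY j x)) (exist _ (Rj j y) (HY j y))).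
  unfold dR, dsub in HJj; simpl in HJj.
  pose proof (HK x (Rj j x)) as A1. pose proof (HK (Rj j y) y) as A2.
  rewrite (metric_sym _ _ Hd x (Rj j x)) in A1.
  pose proof (metric_tri _ _ Hd (Rj j x) x (Rj j y)) as T1.
  pose proof (metric_tri _ _ Hd x y (Rj j y)) as T2.
  rewrite (metric_sym _ _ Hd y (Rj j y)) in T2.
  assert (B1 : K * d (Rj j x) x <= K * e) by (apply Rmult_le_compat_l; lra).
  assert (B2 : K * d (Rj j y) y <= K * e) by (apply Rmult_le_compat_l; lra).
  assert (B3 : L * d (Rj j x) (Rj j y) <= L * (2 * e + d x y))
    by (apply Rmult_le_compat_l; lra).
  unfold dR in *. unfold del in Ee.
  assert (Rabs (f x - f y) <= Rabs (f x - f (Rj j x)) + Rabs (f (Rj j x) - f (Rj j y))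
            + Rabs (f (Rj j y) - f y)).
  { rabs. }
  assert (E1 : (2 * K + 2 * L) * e = 2 * (K * e) + 2 * (L * e)) by ring.
  assert (E2 : L * (2 * e + d x y) = 2 * (L * e) + L * d x y) by ring.
  unfold J in HJj; simpl in HJj. lra.
Qed.
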